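(* Let $G$ be a $6$-regular graph, $\mathcal S$ a canonical path partition of $G$, and let $x_1,x_2\in V_2$ be path neighbors on a path component $P$. Suppose both $x_1$ and $x_2$ go to vertices of the same cycle component $C$. Then for every spanning cycle $H$ of the subgraph of $G$ induced on $V(C)$, there are no vertices $a,b\in V(C)$ such that $x_1$ goes to $a$, $x_2$ goes to $b$, and $a,b$ are consecutive on $H$. Moreover, if $|V(C)|\le 6$, then the number of balanced edges between $\{x_1,x_2\}$ and $V(C)$ is at most $|V(C)|$ (equivalently, $\{x_1,x_2\}$ transfer in total at most $1$ point to $C$ when each such balanced edge carries $1/|V(C)|$ points).
   Context: All graphs are finite, simple and undirected. A path partition of $G=(V,E)$ is a set of vertex-disjoint paths (single vertices allowed) covering $V$; its members are components. A component with $t\ge3$ vertices is a cycle component if the subgraph induced on its vertex set has a spanning cycle; a one-vertex component is an isolated vertex; every other component is a path component. A path partition is canonical if (1) it has the minimum number of components among all path partitions of $G$; (2) among those, it has the maximum number of cycle components; (3) it has no isolated vertices. Given a canonical path partition $\mathcal S$ of $G$: two vertices are path neighbors if they are consecutive on a path component. An edge of $G$ is a free edge unless it joins two path neighbors or has both endpoints in the same cycle component. $V_1$ is the set of end-vertices of path components together with all vertices of cycle components. $V_2$ is the set of vertices not in $V_1$ that are joined by a free edge to a vertex of $V_1$. A balanced edge is a free edge with one endpoint in $V_1$ and the other in $V_2$; for $x\in V_2$, $y\in V_1$ we say $x$ goes to $y$ if $xy$ is a balanced edge. *)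

(* Defs.v *)
(* A simple graph on a finite vertex type T is a symmetric,
   irreflexive boolean relation e : rel T. *)
From mathcomp Require Import all_boot.
Set Implicit Arguments. Unset Strict Implicit. Unset Printing Implicit Defensive.

Section PathPartitions.
Variables (T : finType) (e : rel T).

Definition is_gpath (p : seq T) : bool :=
  if p is x :: q then uniq p && path e x q else false.

Definition path_partition (P : seq (seq T)) : bool :=
  all is_gpath P && perm_eq (flatten P) (enum T).

Definition spanning_cycle (p H : seq T) : bool :=
  perm_eq H p && cycle e H.

Definition is_cycle_comp (p : seq T) : bool :=
  (3 <= size p) && has (spanning_cycle p) (permutations p).

Definition is_isolated (p : seq T) : bool := size p == 1.

Definition is_path_comp (p : seq T) : bool :=
  (2 <= size p) && ~~ is_cycle_comp p.

Definition canonical_pp (P : seq (seq T)) : Prop :=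
  [/\ path_partition P,
      (forall Q, path_partition Q -> size P <= size Q),
      (forall Q, path_partition Q -> size Q = size P ->
          count is_cycle_comp Q <= count is_cycle_comp P)
    & all (fun p => ~~ is_isolated p) P].

Definition consec (p : seq T) (x y : T) : bool :=
  ((x, y) \in zip p (behead p)) || ((y, x) \in zip p (behead p)).

Definition cyc_consec (H : seq T) (a b : T) : bool :=
  ((a, b) \in zip H (rot 1 H)) || ((b, a) \in zip H (rot 1 H)).

Variable P : seq (seq T).

Definition path_nbrs (x y : T) : bool :=
  has (fun p => is_path_comp p && consec p x y) P.

Definition same_cycle_comp (x y : T) : bool :=
  has (fun p => [&& is_cycle_comp p, x \in p & y \in p]) P.

Definition free_edge (x y : T) : bool :=
  [&& e x y, ~~ path_nbrs x y & ~~ same_cycle_comp x y].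

Definition inV1 (x : T) : bool :=
  has (fun p => (is_path_comp p && ((x == head x p) || (x == last x p)))
                || (is_cycle_comp p && (x \in p))) P.

Definition inV2 (x : T) : bool :=
  ~~ inV1 x && [exists y, inV1 y && free_edge x y].

(* x (in V2) goes to y (in V1): xy is a balanced edge *)
Definition goes_to (x y : T) : bool :=
  [&& inV2 x, inV1 y & free_edge x y].

End PathPartitions.

Definition regular (T : finType) (e : rel T) (k : nat) : Prop :=
  forall x : T, #|[set y | e x y]| = k.

(* Main.v *)
Require Import Defs.
From mathcomp Require Import all_boot zify.
Set Implicit Arguments. Unset Strict Implicit.

Section Aux.
Variable T : eqType.

Lemma zip_next_at (y0 y : T) (s : seq T) a b : uniq (y :: s) ->
  ((a, b) \in zip (y :: s) (rcons s y0)) = (a \in y :: s) && (b == next_at a y0 y s).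
Proof.
elim: s y => [|z s IH] y.
  by rewrite /= !inE xpair_eqE; case: (a =P y).
move=> /andP[yn un].
have -> : zip (y :: z :: s) (rcons (z :: s) y0) = (y, z) :: zip (z :: s) (rcons s y0) by [].
rewrite (in_cons (y, z)) (IH z un) xpair_eqE (in_cons y) /=.
case: (a =P y) => [->|] /=; last by [].
by rewrite (negbTE yn) orbF.
Qed.

Lemma zip_next (H : seq T) a b : uniq H ->
  ((a, b) \in zip H (rot 1 H)) = (a \in H) && (b == next H a).
Proof. by case: H => [|h t] //= u; rewrite rot1_cons zip_next_at. Qed.

Lemma consec_split (s : seq T) u v : (u, v) \in zip s (behead s) ->
  exists p1 p2, s = p1 ++ u :: v :: p2.
Proof.
elim: s => [|x s IH] //=; case: s IH => [|y s] IH //=.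
rewrite in_cons => /orP[/eqP[-> ->]|/IH [p1 [p2 ->]]].
  by exists [::], s.
by exists (x :: p1), p2.
Qed.
End Aux.

Section Aux2.
Variables (T : eqType) (e : rel T).
Hypothesis e_sym : symmetric e.

Lemma ham_of_cyc (H : seq T) a b : uniq H -> cycle e H ->
  (a, b) \in zip H (rot 1 H) ->
  exists q, [/\ perm_eq (b :: q) H, path e b q & last b q = a].
Proof.
move=> uH cH; rewrite zip_next // => /andP[aH /eqP ->].
case: (rot_to aH) => i s' hr.
rewrite -(next_rot i uH) hr.
have pr : perm_eq (a :: s') H by rewrite -hr perm_rot.
have cr : cycle e (a :: s') by rewrite -hr rot_cycle.
case: s' pr cr hr => [|c s] pr cr hr /=.
  by rewrite eqxx; exists [::]; split.
rewrite eqxx; exists (rcons s a); split.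
- have -> : c :: rcons s a = rot 1 (a :: c :: s) by rewrite rot1_cons.
  by rewrite perm_rot.
- by move: cr => /= /andP[].
- by rewrite last_rcons.
Qed.

Lemma ham_rev (C : seq T) y q : perm_eq (y :: q) C -> path e y q ->
  exists q', [/\ perm_eq (last y q :: q') C, path e (last y q) q' & last (last y q) q' = y].
Proof.
move=> pq hq; exists (rev (belast y q)); split.
- have -> : last y q :: rev (belast y q) = rev (y :: q).
    by rewrite [y :: q]lastI rev_rcons.
  by rewrite perm_rev.
- rewrite rev_path; apply: sub_path hq => u v; by rewrite e_sym.
- have : last (last y q) (rev (belast y q)) = last y (rev (y :: q)).
    by rewrite [y :: q]lastI rev_rcons.
  by rewrite rev_cons last_rcons.
Qed.

Lemma merge_sorted (p1 p2 q : seq T) u v y :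
  sorted e (p1 ++ u :: v :: p2) -> e u y -> path e y q -> e (last y q) v ->
  sorted e (p1 ++ u :: y :: q ++ v :: p2).
Proof.
move=> hs euy hq ezv.
have key : forall x0 p0, path e x0 (p0 ++ u :: v :: p2) -> path e x0 (p0 ++ u :: y :: q ++ v :: p2).
  move=> x0 p0; rewrite !cat_path /= cat_path /= => /and3P[-> -> /andP[_ ->]].
  by rewrite euy hq ezv.
case: p1 hs key => [|x p1] /= hs key.
  by move: hs => /andP[_ hp2]; rewrite euy cat_path hq /= ezv hp2.
exact: key.
Qed.

End Aux2.

Section Aux3.
Variables (T : finType) (e : rel T).

Lemma gpathE (s : seq T) : is_gpath e s = (s != [::]) && uniq s && sorted e s.
Proof. by case: s. Qed.



Lemma merge_contra (P : seq (seq T)) p C p1 p2 u v y q :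
  path_partition e P -> (forall Q, path_partition e Q -> size P <= size Q) ->
  p \in P -> C \in P -> p != C -> p = p1 ++ u :: v :: p2 ->
  perm_eq (y :: q) C -> path e y q -> e u y -> e (last y q) v -> False.
Proof.
move=> /andP[hall hperm] hmin hp hC pC dp pq hq euy ezv.
set r := p1 ++ u :: y :: q ++ v :: p2.
set R := rem C (rem p P).
have Crem : C \in rem p P.
  by move: hC; rewrite (perm_mem (perm_to_rem hp)) in_cons eq_sym (negbTE pC).
have hPR : perm_eq P (p :: C :: R).
  by apply: perm_trans (perm_to_rem hp) _; rewrite perm_cons perm_to_rem.
have hsz : size P = (size R).+2 by rewrite (perm_size hPR).
have hr : perm_eq r (p ++ C).
  rewrite /r dp -catA perm_cat2l.
  have -> : u :: y :: q ++ v :: p2 = u :: ((y :: q) ++ v :: p2) by [].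
  have -> : (u :: v :: p2) ++ C = u :: ((v :: p2) ++ C) by [].
  by rewrite perm_cons perm_catC perm_cat2l.
have hfl : perm_eq (flatten (r :: R)) (enum T).
  have h1 : perm_eq (flatten (r::R)) (flatten (p::C::R)) by rewrite /= catA perm_cat2r.
  have h2 : perm_eq [:: p, C & R] P by rewrite perm_sym.
  exact: perm_trans (perm_trans h1 (perm_flatten h2)) hperm.
have ur : uniq r.
  by move: (perm_uniq hfl); rewrite enum_uniq /= cat_uniq => /and3P[].
have subR : {subset R <= P} by move=> s /mem_rem /mem_rem.
have sr : sorted e r.
  apply: merge_sorted => //; move/allP: hall => /(_ p hp); rewrite gpathE dp.
  by case/andP.
have gr : is_gpath e r.
  rewrite gpathE ur sr !andbT; rewrite /r; by case: (p1).
have hQ : path_partition e (r :: R).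
  rewrite /path_partition hfl andbT /= gr /=.
  by apply/allP => s /subR; move/allP: hall; apply.
move: (hmin _ hQ); rewrite hsz /=.
by rewrite ltnn.
Qed.


End Aux3.

Theorem mainTheorem10 (T : finType) (e : rel T)
  (e_sym : symmetric e) (e_irr : irreflexive e) (e_reg : regular e 6)
  (P : seq (seq T)) (hP : canonical_pp e P)
  (x1 x2 : T) (hx1 : inV2 e P x1) (hx2 : inV2 e P x2)
  (p : seq T) (hp : p \in P) (hpc : is_path_comp e p) (hnb : consec p x1 x2)
  (C : seq T) (hC : C \in P) (hCc : is_cycle_comp e C)
  (ha : has (goes_to e P x1) C) (hb : has (goes_to e P x2) C) :
  (forall H : seq T, spanning_cycle e C H ->
     ~ (exists a b : T, [/\ a \in C, b \in C, goes_to e P x1 a,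
                          goes_to e P x2 b & cyc_consec H a b]))
  /\ (size C <= 6 -> count (goes_to e P x1) C + count (goes_to e P x2) C <= size C).
Proof.
case: hP => hpp hmin _ _.
have uC : uniq C.
  by move/allP: (andP hpp).1 => /(_ C hC); rewrite gpathE => /andP[/andP[]].
have pC : p != C.
  by apply/eqP => epC; move: hpc; rewrite epC /is_path_comp hCc andbF.
have rev' : forall y z, (exists q, [/\ perm_eq (y :: q) C, path e y q & last y q = z]) ->
    exists q, [/\ perm_eq (z :: q) C, path e z q & last z q = y].
  move=> y z [q [pq hq lq]]; have [q' [h1 h2 h3]] := ham_rev e_sym pq hq.
  by exists q'; rewrite -lq.
have claim1 : forall H : seq T, spanning_cycle e C H ->
     ~ (exists a b : T, [/\ a \in C, b \in C, goes_to e P x1 a,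
                          goes_to e P x2 b & cyc_consec H a b]).
  move=> H /andP[pH cH] [a [b [aC bC ga gb hab]]].
  have uH : uniq H by rewrite (perm_uniq pH).
  have ea : e x1 a by case/and3P: ga => _ _ /and3P[].
  have eb : e x2 b by case/and3P: gb => _ _ /and3P[].
  have hab' : exists q, [/\ perm_eq (a :: q) C, path e a q & last a q = b].
    case/orP: hab => hz.
      have [q [h1 h2 h3]] := ham_of_cyc uH cH hz.
      apply: (rev' b a); exists q; split => //; exact: perm_trans h1 pH.
    have [q [h1 h2 h3]] := ham_of_cyc uH cH hz.
    by exists q; split => //; exact: perm_trans h1 pH.
  have hba' := rev' _ _ hab'.
  case/orP: hnb => /consec_split [p1 [p2 dp]].
    case: hab' => q [h1 h2 h3].
    apply: (merge_contra hpp hmin hp hC pC dp h1 h2 ea).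
    by rewrite h3 e_sym.
  case: hba' => q [h1 h2 h3].
  apply: (merge_contra hpp hmin hp hC pC dp h1 h2 eb).
  by rewrite h3 e_sym.
split => // _.
case/andP: hCc => _ /hasP [H _ hH].
have pH := (andP hH).1.
have uH : uniq H by rewrite (perm_uniq pH).
have /permP cnt := pH.
rewrite -(perm_size pH) -!cnt.
set A := goes_to e P x1; set B := goes_to e P x2.
have us : uniq (map (next H) (filter A H) ++ filter B H).
  rewrite cat_uniq (map_inj_uniq (can_inj (prev_next uH))) !filter_uniq //=.
  rewrite andbT; apply/hasPn => b; rewrite mem_filter => /andP[Bb bH].
  apply/mapP => [[a]]; rewrite mem_filter => /andP[Aa aH] eb.
  apply: (claim1 H hH); exists a, b; split => //.
  - by rewrite -(perm_mem pH).
  - by rewrite -(perm_mem pH).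
  - by rewrite /cyc_consec zip_next // aH eb eqxx.
have := uniq_leq_size us.
rewrite size_cat size_map !size_filter; apply => x.
rewrite mem_cat => /orP[/mapP [a] | ]; last by rewrite mem_filter => /andP[].
by rewrite mem_filter => /andP[_ aH] ->; rewrite mem_next.
Qed.
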